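(* Let $N,K$ be positive integers, $\mathcal{N}=\{1,\dots,N\}$, and let $\underline{\mathsf{d}}$ be uniformly distributed over $\mathcal{N}^K$. Then for every integer $s$ with $1\le s\le\lceil\min\{N,K\}/4\rceil$, \[ \Pr\bigl(w(\underline{\mathsf{d}})\ge s\bigr)\ge 2/3, \] where $w(\underline{\mathsf{d}})$ is the number of distinct entries of $\underline{\mathsf{d}}$. *)

(* Defs.v *)
From mathcomp Require Import all_boot all_order all_algebra.
Set Implicit Arguments. Unset Strict Implicit. Unset Printing Implicit Defensive.
Import Order.TTheory GRing.Theory Num.Theory.

(* The alphabet N = {1..N} is modelled by 'I_N (relabelled 0..N-1);
   a demand vector d in N^K is a finite function {ffun 'I_K -> 'I_N}. *)

Definition nb_distinct (N K : nat) (d : {ffun 'I_K -> 'I_N}) : nat :=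
  #|[set d k | k : 'I_K]|.

Definition unif_prob (N K : nat) (A : pred {ffun 'I_K -> 'I_N}) : rat :=
  (#|A|%:R / #|{ffun 'I_K -> 'I_N}|%:R)%R.

Definition ceil_div4 (m : nat) : nat := (m + 3) %/ 4.

(* Main.v *)
Require Import Defs.
From mathcomp Require Import all_boot all_order all_algebra.
Import Order.TTheory GRing.Theory Num.Theory.
Set Implicit Arguments. Unset Strict Implicit.

Section S.
Variable T : finType.
Definition ext K (f : {ffun 'I_K -> T}) (x : T) : {ffun 'I_K.+1 -> T} :=
  [ffun i => if unlift ord_max i is Some j then f j else x].
Definition restr K (g : {ffun 'I_K.+1 -> T}) : {ffun 'I_K -> T} :=
  [ffun j => g (lift ord_max j)].

Lemma sum_ext K (F : {ffun 'I_K.+1 -> T} -> nat) :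
  \sum_g F g = \sum_(f : {ffun 'I_K -> T}) \sum_(x : T) F (ext f x).
Proof.
rewrite pair_big /= (reindex (fun p : {ffun 'I_K -> T} * T => ext p.1 p.2)) //.
exists (fun g => (restr g, g ord_max)) => [[f x] _ | g _] /=.
  congr pair; last by rewrite ffunE unlift_none.
  by apply/ffunP => j; rewrite !ffunE liftK.
apply/ffunP => i; rewrite ffunE; case: unliftP => [j ->|->] //.
by rewrite ffunE.
Qed.

Lemma im_ext K (f : {ffun 'I_K -> T}) x :
  [set ext f x k | k : 'I_K.+1] = x |: [set f k | k : 'I_K].
Proof.
apply/setP => y; apply/imsetP/setU1P.
  case=> k _ ->; rewrite ffunE; case: unliftP => [j _|_]; last by left.
  by right; apply: imset_f.
case=> [->|/imsetP [j _ ->]].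
  by exists ord_max; rewrite ?inE // ffunE unlift_none.
by exists (lift ord_max j); rewrite ?inE // ffunE liftK.
Qed.
End S.
From mathcomp Require Import zify lra.
Definition S N K j := \sum_(d : {ffun 'I_K -> 'I_N}) (nb_distinct d <= j).
Definition S' N K j := \sum_(d : {ffun 'I_K -> 'I_N}) (nb_distinct d < j).

Lemma sum_mem (T : finType) (A : {pred T}) : \sum_(x : T) (x \in A : nat) = #|A|.
Proof. rewrite -sum1_card [RHS]big_mkcond /=; apply: eq_bigr => x _; by case: (x \in A). Qed.

Lemma rec N K j : S N K.+1 j <= N * S' N K j + j * S N K j.
Proof.
rewrite /S /S' sum_ext !big_distrr -big_split /=; apply: leq_sum => f _.
rewrite /nb_distinct.
set A := [set f k | k : 'I_K].
apply: (@leq_trans (\sum_(x : 'I_N) ((#|A| < j) + (x \in A) * (#|A| <= j)))).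
  apply: leq_sum => x _; rewrite im_ext -/A cardsU1.
  by case: (x \in A); rewrite /= ?add0n ?add1n ?mul1n ?mul0n ?addn0 ?leq_addl.
rewrite big_split /= sum_nat_const card_ord -big_distrl /= sum_mem mulnC.
rewrite leq_add2l; case: (leqP #|A| j) => H; by rewrite ?muln1 ?muln0.
Qed.

Lemma Sle N K j : S N K j <= N ^ K.
Proof.
apply: (@leq_trans (\sum_(d : {ffun 'I_K -> 'I_N}) 1)).
  by apply: leq_sum => d _; exact: leq_b1.
by rewrite sum_nat_const card_ffun !card_ord muln1.
Qed.

Lemma S'0 N K : S' N K 0 = 0.
Proof. by rewrite /S' big1. Qed.

Lemma S'S N K i : S' N K i.+1 = S N K i.
Proof. by []. Qed.

Lemma Sbound N (hN : 0 < N) K : forall j, S N K j <= 2 ^ K * N ^ j * j ^ (K - j).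
Proof.
elim: K => [|K IH] j.
  rewrite (leq_trans (Sle _ _ _)) // expn0 mul1n sub0n expn0 muln1 expn_gt0 hN //.
case: (leqP j K) => hj; last first.
  have -> : K.+1 - j = 0 by apply/eqP; rewrite subn_eq0.
  by rewrite muln1; apply: (leq_trans (Sle _ _ _)); rewrite (leq_trans (leq_pexp2l hN hj)) // leq_pmull // expn_gt0.
apply: (leq_trans (rec _ _ _)).
case: j hj => [|i] hi; first by rewrite S'0 muln0 mul0n.
rewrite S'S subSS.
have -> : K - i = (K - i.+1).+1 by rewrite subnSK.
apply: (@leq_trans (N * (2 ^ K * N ^ i * i.+1 ^ (K - i.+1).+1) + i.+1 * (2 ^ K * N ^ i.+1 * i.+1 ^ (K - i.+1)))).
  apply: leq_add; rewrite leq_mul2l ?IH ?orbT //.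
  apply/orP; right; apply: (leq_trans (IH i)); rewrite subnSK // leq_mul2l leq_exp2r ?subn_gt0 ?leqnSn ?orbT //.
rewrite !expnS; set a := 2 ^ K; set b := N ^ i; set c := i.+1 ^ (K - i.+1); nia.
Qed.

Lemma numeric N K t (hN : 4 * t + 1 <= N) (hK : 4 * t + 1 <= K) :
  3 * S N K t <= N ^ K.
Proof.
have N0 : 0 < N by lia.
case: t hN hK => [|t] hN hK.
  have := Sbound N0 K 0; rewrite subn0 exp0n; last lia.
  by rewrite muln0 leqn0 => /eqP ->.
set u := t.+1 in hN hK *.
apply: (leq_trans (leq_mul (leqnn 3) (Sbound N0 K u))).
have e1 : 3 * 2 ^ K <= 4 ^ (K - u).
  rewrite (_ : 4 = 2 ^ 2) // -expnM.
  apply: (@leq_trans (2 ^ 2 * 2 ^ K)); first by apply: leq_mul.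
  rewrite -expnD leq_exp2l //; lia.
have e2 : 4 * u <= N by lia.
have eK : N ^ K = N ^ u * N ^ (K - u) by rewrite -expnD subnKC //; lia.
rewrite eK.
apply: (@leq_trans (4 ^ (K - u) * N ^ u * u ^ (K - u))).
  by rewrite !mulnA; apply: leq_mul => //; apply: leq_mul.
rewrite mulnAC -expnMn mulnC; apply: leq_mul => //.
rewrite leq_exp2r //; lia.
Qed.

Unset Implicit Arguments.
Theorem lemma2 (N K : nat) (hN : (0 < N)%N) (hK : (0 < K)%N) (s : nat)
  (hs1 : (1 <= s)%N) (hs2 : (s <= ceil_div4 (minn N K))%N) :
  ((2%:R / 3%:R : rat) <= unif_prob [pred d : {ffun 'I_K -> 'I_N} | (s <= nb_distinct d)%N])%R.
Proof.
move: hs2; rewrite /ceil_div4 leq_divRL // => hs2.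
have hN4 : 4 * s.-1 + 1 <= N by have := geq_minl N K; have := geq_minr N K; lia.
have hK4 : 4 * s.-1 + 1 <= K by have := geq_minl N K; have := geq_minr N K; lia.
have hb := numeric hN4 hK4.
set P := [pred d : {ffun 'I_K -> 'I_N} | (s <= nb_distinct d)%N].
have hC := cardC P.
have hS : #|[predC P]| = S N K s.-1.
  rewrite -sum_mem /S; apply: eq_bigr => d _.
  by rewrite !inE /= -ltnNge; case: s hs1 {hs2 hN4 hK4 hb P hC}.
rewrite /unif_prob card_ffun !card_ord -/P.
rewrite hS card_ffun !card_ord in hC.
have M0 : (0 < (N ^ K)%:R :> rat)%R by rewrite ltr0n expn_gt0 hN.
rewrite ler_pdivlMr //.
have : (3 * (N ^ K - S N K s.-1) >= 2 * N ^ K)%N by lia.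
have -> : #|P| = N ^ K - S N K s.-1 by rewrite -hC addnK.
rewrite -(ler_nat rat) !natrM => H.
have Hle : (S N K s.-1 <= N ^ K)%N by lia.
move: H; rewrite natrB //; lra.
Qed.
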